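(* Let $Z=Z(P)$ be a fake weighted projective plane, with $\operatorname{Cl}(Z)\cong\mathbb{Z}\times\mathbb{Z}/n\mathbb{Z}$ and $w_0,w_1,w_2$ as in the context. Then there exists an integer $0\le x<nw_2$ with $\gcd(x,nw_2)=1$ such that $Z(P)\cong Z(P')$, where \[ P'=\begin{bmatrix}1 & x & -\frac{w_0+xw_1}{w_2}\\ 0 & nw_2 & -nw_1\end{bmatrix}. \]
   Context: Ground field algebraically closed of characteristic zero. For an integral $2\times3$ matrix $P=[v_0\ v_1\ v_2]$ with primitive columns generating $\mathbb{Q}^2$ as a convex cone, $Z(P)$ denotes the toric surface of the unique complete fan in $\mathbb{Z}^2$ with rays through $v_0,v_1,v_2$ (a fake weighted projective plane). Under a splitting $\operatorname{Cl}(Z)\cong\mathbb{Z}\times\mathbb{Z}/n\mathbb{Z}$, write $[D_i]=(w_i,\eta_i)$ for the invariant prime divisor $D_i$ of $v_i$, with the splitting chosen so that $w_i>0$. *)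

(* Defs.v *)
From mathcomp Require Import all_boot all_order all_algebra all_fingroup.
Set Implicit Arguments. Unset Strict Implicit. Unset Printing Implicit Defensive.
Import Order.TTheory GRing.Theory Num.Theory.
Local Open Scope ring_scope.

Definition fwpp_matrix (P : 'M[int]_(2,3)) : Prop :=
  (forall i : 'I_3, gcdz (P ord0 i) (P ord_max i) = 1%N) /\
  (forall q0 q1 : rat, exists a : 'I_3 -> rat,
      (forall i, 0 <= a i) /\
      q0 = \sum_i a i * (P ord0 i)%:~R /\
      q1 = \sum_i a i * (P ord_max i)%:~R).

(* Cl(Z(P)) = Z^3 / im(M -> Z^3, u |-> (<u,v_i>)_i), the class [D_i] being the
   image of e_i.  "class_group_splitting P n w eta" says: the map
   Z^3 -> Z x Z/nZ,  e_i |-> (w_i, eta_i mod n)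
   is surjective with kernel exactly the image of the character lattice, i.e.
   it induces an isomorphism Cl(Z) ~ Z x Z/nZ with [D_i] = (w_i, eta_i);
   moreover w_i > 0. *)
Definition class_group_splitting (P : 'M[int]_(2,3)) (n : nat)
    (w eta : 'I_3 -> int) : Prop :=
  (0 < n)%N /\ (forall i, 0 < w i) /\
  (forall a : 'I_3 -> int,
      (\sum_i a i * w i = 0 /\ (\sum_i a i * eta i = 0 %[mod n%:Z])%Z) <->
      (exists u0 u1 : int, forall i, a i = u0 * P ord0 i + u1 * P ord_max i)) /\
  (forall m k : int, exists a : 'I_3 -> int,
      \sum_i a i * w i = m /\ (\sum_i a i * eta i = k %[mod n%:Z])%Z).

Definition trip (w0 w1 w2 : int) : 'I_3 -> int :=
  fun i => nth 0 [:: w0; w1; w2] i.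

(* Isomorphism of the toric surfaces Z(P) ~ Z(Q) of the complete fans with the
   three rays through the columns: a lattice automorphism A in GL_2(Z) mapping
   the rays of one fan onto those of the other. *)
Definition toric_iso (P Q : 'M[int]_(2,3)) : Prop :=
  exists (A : 'M[int]_2) (s : {perm 'I_3}),
    (\det A = 1 \/ \det A = -1) /\
    forall i : 'I_3, A *m col i P = col (s i) Q.

Definition Pprime (n : nat) (w0 w1 w2 x : int) : 'M[int]_(2,3) :=
  \matrix_(i < 2, j < 3)
    if i == ord0 then nth 0 [:: 1; x; - ((w0 + x * w1) %/ w2)%Z] j
    else nth 0 [:: 0; n%:Z * w2; - (n%:Z * w1)] j.

(* Main.v *)
Require Import Defs.
From mathcomp Require Import all_boot all_order all_algebra all_fingroup.
From mathcomp Require Import zify ring.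
Import Order.TTheory GRing.Theory Num.Theory.
Local Open Scope ring_scope.

Definition i0 : 'I_3 := ord0.
Definition i1 : 'I_3 := @Ordinal 3 1 isT.
Definition i2 : 'I_3 := @Ordinal 3 2 isT.

Lemma sum3 (f : 'I_3 -> int) : \sum_i f i = f i0 + f i1 + f i2.
Proof.
rewrite !big_ord_recr big_ord0 /= add0r.
by congr (f _ + f _ + f _); apply: val_inj.
Qed.

Lemma ord3_cases (i : 'I_3) : i = i0 \/ i = i1 \/ i = i2.
Proof.
case: i => [[|[|[|//]]]] H.
- by left; apply: val_inj.
- by right; left; apply: val_inj.
- by right; right; apply: val_inj.
Qed.

Lemma det2 (A : 'M[int]_2) : \det A = A ord0 ord0 * A ord_max ord_max - A ord0 ord_max * A ord_max ord0.
Proof.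
rewrite (expand_det_row _ ord0) !big_ord_recr big_ord0 /= add0r /cofactor !det_mx11 !mxE /=.
rewrite (_ : widen_ord (leqnSn 1) ord_max = ord0); last exact: val_inj.
rewrite (_ : lift ord0 0 = ord_max :> 'I_2); last exact: val_inj.
rewrite (_ : lift ord_max 0 = ord0 :> 'I_2); last exact: val_inj.
rewrite /= expr0 expr1 mul1r mulN1r; ring.
Qed.

Lemma col2_eq (M N : 'M[int]_(2,1)) : M ord0 ord0 = N ord0 ord0 -> M ord_max ord0 = N ord_max ord0 -> M = N.
Proof.
move=> h0 h1; apply/matrixP => r c.
rewrite (ord1 c).
case: r => [[|[|//]]] H.
- by rewrite (_ : Ordinal H = ord0) //; apply: val_inj.
- by rewrite (_ : Ordinal H = ord_max) //; apply: val_inj.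
Qed.

Lemma mulmx_col (A : 'M[int]_2) (P : 'M[int]_(2,3)) i r :
  (A *m col i P) r ord0 = A r ord0 * P ord0 i + A r ord_max * P ord_max i.
Proof.
rewrite !mxE !big_ord_recr big_ord0 /= add0r !mxE.
by congr (A r _ * P _ i + A r _ * P _ i); apply: val_inj.
Qed.


Ltac plia := repeat match goal with H : context [dvdz] |- _ => clear H end; lia.

Theorem proposition8p3 (P : 'M[int]_(2,3)) (n : nat) (w0 w1 w2 : int)
    (eta : 'I_3 -> int) :
  fwpp_matrix P ->
  class_group_splitting P n (trip w0 w1 w2) eta ->
  exists x : int,
    0 <= x < n%:Z * w2 /\
    gcdz x (n%:Z * w2) = 1%N /\
    (w2 %| w0 + x * w1)%Z /\
    toric_iso P (Pprime n w0 w1 w2 x).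
Proof.
move=> [Hprim _] [n0 [wpos [H1 H2]]].
have w2pos : 0 < w2 := wpos i2.
have w2n0 : w2 != 0 by rewrite gt_eqF.
have npos : 0 < n%:Z by rewrite ltz_nat.
have nn0 : n%:Z != 0 by rewrite gt_eqF.
have HL : forall u0 u1 : int,
  (u0 * P ord0 i0 + u1 * P ord_max i0) * w0 + (u0 * P ord0 i1 + u1 * P ord_max i1) * w1
   + (u0 * P ord0 i2 + u1 * P ord_max i2) * w2 = 0 /\
  (n%:Z %| (u0 * P ord0 i0 + u1 * P ord_max i0) * eta i0 + (u0 * P ord0 i1 + u1 * P ord_max i1) * eta i1
   + (u0 * P ord0 i2 + u1 * P ord_max i2) * eta i2)%Z.
  move=> u0 u1.
  have [] := proj2 (H1 (fun i => u0 * P ord0 i + u1 * P ord_max i)); first by exists u0, u1.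
  rewrite !sum3 => hw /eqP; rewrite eqz_mod_dvd subr0 => he; by split.
have HLb : forall b0 b1 b2 : int, b0 * w0 + b1 * w1 + b2 * w2 = 0 ->
   (n%:Z %| b0 * eta i0 + b1 * eta i1 + b2 * eta i2)%Z ->
   exists u0 u1 : int, b0 = u0 * P ord0 i0 + u1 * P ord_max i0 /\
     b1 = u0 * P ord0 i1 + u1 * P ord_max i1 /\ b2 = u0 * P ord0 i2 + u1 * P ord_max i2.
  move=> b0 b1 b2 hw he.
  suff [u0 [u1 hu]] : exists u0 u1 : int, forall i, trip b0 b1 b2 i = u0 * P ord0 i + u1 * P ord_max i.
    by exists u0, u1; split; [exact: (hu i0) | split; [exact: (hu i1) | exact: (hu i2)]].
  apply: (proj1 (H1 (trip b0 b1 b2))).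
  split; first by rewrite sum3.
  by apply/eqP; rewrite eqz_mod_dvd subr0 sum3.
have HS : forall m k : int, exists b0 b1 b2 : int, b0 * w0 + b1 * w1 + b2 * w2 = m /\
    (n%:Z %| b0 * eta i0 + b1 * eta i1 + b2 * eta i2 - k)%Z.
  move=> m k; have [a [ha hk]] := H2 m k.
  exists (a i0), (a i1), (a i2); split; first by rewrite -ha sum3.
  by move/eqP: hk; rewrite eqz_mod_dvd sum3.
have [[al be] /= hab] : exists uv : int * int, uv.1 * P ord0 i0 + uv.2 * P ord_max i0 = 1.
  by apply/coprimezP; rewrite /coprimez; apply/eqP; exact: Hprim i0.
have [[mu nu] /= hmn] : exists uv : int * int, uv.1 * P ord0 i1 + uv.2 * P ord_max i1 = 1.
  by apply/coprimezP; rewrite /coprimez; apply/eqP; exact: Hprim i1.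
have [p00 e00] : exists x, P ord0 i0 = x by eexists.
have [p01 e01] : exists x, P ord0 i1 = x by eexists.
have [p02 e02] : exists x, P ord0 i2 = x by eexists.
have [p10 e10] : exists x, P ord_max i0 = x by eexists.
have [p11 e11] : exists x, P ord_max i1 = x by eexists.
have [p12 e12] : exists x, P ord_max i2 = x by eexists.
rewrite e00 e01 e02 e10 e11 e12 in HL HLb hab hmn.
move: HL HLb HS.
move: (eta i0) (eta i1) (eta i2) => e0 e1 e2 HL HLb HS.
have [hDE0 hDEe0] := HL (- p10) p00.
have [hA0 hAe0] := HL al be.
rewrite hab !mul1r in hA0 hAe0.
move: hA0 hAe0.
have [a da] : exists a, a = al * p01 + be * p11 by eexists.
have [c dc] : exists c, c = al * p02 + be * p12 by eexists.
rewrite -da -dc => hAc hAce.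
have [D dD] : exists D, D = p00 * p11 - p10 * p01 by eexists.
have [E dE] : exists E, E = p00 * p12 - p10 * p02 by eexists.
have hDE : w1 * D + w2 * E = 0.
  have := congr1 ( *%R w1) dD; have := congr1 ( *%R w2) dE; plia.
have hDEe : (n%:Z %| D * e1 + E * e2)%Z.
  rewrite (_ : D * e1 + E * e2 = (- p10 * p00 + p00 * p10) * e0 + (- p10 * p01 + p00 * p11) * e1 +
     (- p10 * p02 + p00 * p12) * e2) //.
  have := congr1 ( *%R e1) dD; have := congr1 ( *%R e2) dE; plia.
have [a0 [a1 [a2 [ha _]]]] := HS 1 0.
have [r1 dr1] : exists r1, r1 = a1 - a0 * a by eexists.
have [r2 dr2] : exists r2, r2 = a2 - a0 * c by eexists.
have hr : r1 * w1 + r2 * w2 = 1.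
  have := congr1 ( *%R w1) dr1; have := congr1 ( *%R w2) dr2; have := congr1 ( *%R a0) hAc; plia.
have [k dk] : exists k, k = r2 * D - r1 * E by eexists.
have hDk : D = w2 * k.
  have := congr1 ( *%R w2) dk; have := congr1 ( *%R D) hr; have := congr1 ( *%R r1) hDE; plia.
have hEk : E = - (w1 * k).
  have : w2 * (E + w1 * k) = 0.
    have := congr1 ( *%R w1) hDk; plia.
  move/eqP; rewrite mulf_eq0 (negbTE w2n0) /= => /eqP; plia.
have [b0 [b1 [b2 [hb hbe]]]] := HS 0 1.
have [t1 dt1] : exists t1, t1 = b1 - b0 * a by eexists.
have [t2 dt2] : exists t2, t2 = b2 - b0 * c by eexists.
have ht : t1 * w1 + t2 * w2 = 0.
  have := congr1 ( *%R w1) dt1; have := congr1 ( *%R w2) dt2; have := congr1 ( *%R b0) hAc; plia.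
have [m dm] : exists m, m = r2 * t1 - r1 * t2 by eexists.
have ht1 : t1 = w2 * m.
  have := congr1 ( *%R w2) dm; have := congr1 ( *%R t1) hr; have := congr1 ( *%R r1) ht; plia.
have ht2 : t2 = - (w1 * m).
  have : w2 * (t2 + w1 * m) = 0.
    have := congr1 ( *%R w1) ht1; plia.
  move/eqP; rewrite mulf_eq0 (negbTE w2n0) /= => /eqP; plia.
have [ee dee] : exists ee, ee = w2 * e1 - w1 * e2 by eexists.
have hme : (n%:Z %| m * ee - 1)%Z.
  rewrite (_ : m * ee - 1 = (b0 * e0 + b1 * e1 + b2 * e2 - 1) - b0 * (e0 + a * e1 + c * e2)).
    by apply: rpredB => //; apply: dvdz_mull.
  have := congr1 ( *%R m) dee; have := congr1 ( *%R e1) ht1; have := congr1 ( *%R e2) ht2.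
  have := congr1 ( *%R e1) dt1; have := congr1 ( *%R e2) dt2; plia.
have hkee : (n%:Z %| k * ee)%Z.
  rewrite (_ : k * ee = D * e1 + E * e2) //.
  have := congr1 ( *%R k) dee; have := congr1 ( *%R e1) hDk; have := congr1 ( *%R e2) hEk; plia.
have hk : (n%:Z %| k)%Z.
  rewrite (_ : k = m * (k * ee) - k * (m * ee - 1)); last by ring.
  by apply: rpredB; apply: dvdz_mull.
have [u0 [u1 [hu0 [hu1 hu2]]]] : exists u0 u1 : int, 0 = u0 * p00 + u1 * p10 /\
     n%:Z * w2 = u0 * p01 + u1 * p11 /\ - (n%:Z * w1) = u0 * p02 + u1 * p12.
  apply: HLb; first by ring.
  rewrite (_ : 0 * e0 + n%:Z * w2 * e1 + - (n%:Z * w1) * e2 = ee * n%:Z).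
    by apply: dvdz_mull.
  rewrite dee; ring.
have [t dt] : exists t, t = al * u1 - be * u0 by eexists.
have hu0' : u0 = - (t * p10).
  have := congr1 ( *%R p10) dt; have := congr1 ( *%R u0) hab; have := congr1 ( *%R al) hu0; plia.
have hu1' : u1 = t * p00.
  have := congr1 ( *%R p00) dt; have := congr1 ( *%R u1) hab; have := congr1 ( *%R be) hu0; plia.
have hnt : n%:Z = t * k.
  have : w2 * (n%:Z - t * k) = 0.
    have := congr1 ( *%R t) hDk; have := congr1 ( *%R p01) hu0'; have := congr1 ( *%R p11) hu1'.
    have := congr1 ( *%R t) dD; plia.
  move/eqP; rewrite mulf_eq0 (negbTE w2n0) /= => /eqP; plia.
have [sg hsg] := dvdzP hk.
have hts : t * sg = 1.
  have : n%:Z * (t * sg - 1) = 0.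
    have := congr1 ( *%R t) hsg; plia.
  move/eqP; rewrite mulf_eq0 (negbTE nn0) /= => /eqP; plia.
have ht1' : t = 1 \/ t = -1.
  have : (t %| 1)%Z by apply/dvdzP; exists sg; rewrite mulrC hts.
  rewrite /dvdz unfold_in /= dvdn1 => /eqP; clear -hts; lia.
have htD : t * D = n%:Z * w2.
  have := congr1 ( *%R t) hDk; have := congr1 ( *%R w2) hnt; plia.
have htE : t * E = - (n%:Z * w1).
  have := congr1 ( *%R t) hEk; have := congr1 ( *%R w1) hnt; plia.
have Npos : 0 < n%:Z * w2 by rewrite mulr_gt0.
have Nn0 : n%:Z * w2 != 0 by rewrite gt_eqF.
have hx := divz_eq a (n%:Z * w2).
have X0 := modz_ge0 a Nn0.
have X1 := ltz_pmod a Npos.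
move: hx X0 X1; move: (a %/ (n%:Z * w2))%Z (a %% (n%:Z * w2))%Z => Q X hx X0 X1.
exists X.
split; first by rewrite X0 X1.
split.
  suff /eqP : coprimez X (n%:Z * w2) by [].
  have [K dK] : exists K : int, K = mu* p00+nu* p10 by eexists.
  have [K2 dK2] : exists K2 : int, K2 = Q*(mu* p00+nu* p10) + sg*(nu*al - mu*be) by eexists.
  apply/coprimezP; exists (K, K2) => /=; rewrite dK dK2.
  have := congr1 ( *%R (mu* p00+nu* p10)) hx; have := congr1 ( *%R ((nu*al - mu*be)*w2)) hsg.
  have := congr1 ( *%R (nu*al - mu*be)) hDk; have := congr1 ( *%R (mu* p00+nu* p10)) da.
  have := congr1 ( *%R (nu*al - mu*be)) dD; have := congr1 ( *%R (mu* p01)) hab.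
  have := congr1 ( *%R (nu* p11)) hab; plia.
have hw : w0 + X * w1 = - (c + Q * n%:Z * w1) * w2.
  have := congr1 ( *%R w1) hx; plia.
split; first by apply/dvdzP; exists (- (c + Q * n%:Z * w1)).
exists (\matrix_(i < 2, j < 2) if i == ord0 then (if j == ord0 then al + Q*t* p10 else be - Q*t* p00)
          else (if j == ord0 then - (t* p10) else t* p00)), 1%g.
split.
  rewrite det2 !mxE /=.
  have -> : (al + Q * t * p10) * (t * p00) - (be - Q * t * p00) * - (t * p10) = t.
    have := congr1 ( *%R t) hab; plia.
  by case: ht1' => ->; auto.
move=> i; rewrite perm1; apply: col2_eq; rewrite !mulmx_col !mxE /=;
  case: (ord3_cases i) => [->|[->|->]] /=; rewrite ?e00 ?e01 ?e02 ?e10 ?e11 ?e12 ?hw ?mulzK // ?opprK;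
  have := congr1 ( *%R (Q*t)) dD; have := congr1 ( *%R Q) htD; have := congr1 ( *%R t) dD;
  have := congr1 ( *%R (Q*t)) dE; have := congr1 ( *%R Q) htE; have := congr1 ( *%R t) dE; plia.
Qed.
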